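(* Let $f=\frac1n\sum_{i=1}^n f_i$ with each $f_i:\mathbb{R}^d\to\mathbb{R}$ twice continuously differentiable, and suppose there are constants $0<\mu<L$ such that for all $i$ and all $x,\hat x\in\mathbb{R}^d$, $$\mu\|x-\hat x\|^2\le (\nabla f_i(x)-\nabla f_i(\hat x))^\top(x-\hat x)\le L\|x-\hat x\|^2 .$$ Let $x^*$ be the minimizer of $f$ and $\kappa=L/\mu$. Consider the asynchronous L-DQN iteration described in the context, with a constant stepsize $\eta_t=\eta$, and suppose there are constants $0<\epsilon_d<\epsilon_u$ such that for all $i=1,\dots,n$, all $t>0$ and all $x\in\mathbb{R}^d$, $$\epsilon_d I_d\preceq (\tilde B_i^t)^{-1/2}\nabla^2 f_i(x)(\tilde B_i^t)^{-1/2}\preceq \epsilon_u I_d .$$ Suppose the ratio $\epsilon:=\epsilon_u/\epsilon_d$ satisfies $$\epsilon<\frac12\left[1+\frac1\kappa+\sqrt{\Big(1+\frac1\kappa\Big)^2+\frac4\kappa}\right],$$ and that the stepsize satisfies $\eta\in\Big(\frac{1}{\epsilon_d}\big[1-\frac{1}{\epsilon\kappa}\big],\ \frac{2}{\epsilon_d+\epsilon_u}\Big)$. Then the iterates converge linearly over epochs: there exists $\rho<1$ such that for every $m\in\mathbb{N}^+$ and every $t\in[E_m,E_{m+1})$, $$\|x^{t+1}-x^*\|\le \rho^{m}\|x^0-x^*\|.$$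
   Context: Setting (master/worker, asynchronous): a master holds the iterate $x^t\in\mathbb{R}^d$ at time $t=0,1,2,\dots$; at each time $t$ one worker $i_t\in\{1,\dots,n\}$ communicates with the master. For worker $i$ and time $t$, $d_i^t\ge 0$ denotes the delay, i.e. the last exchange between the master and worker $i$ took place at time $t-d_i^t$, and $D_i^t:=d_i^t+d_i^{t-d_i^t-1}+1$ denotes the double delay, i.e. the exchange before that took place at time $t-D_i^t$. Each worker $i$ holds a local copy $z_i^t$ of the iterate it last received from the master (so $z_i^t=z_i^{t-d_i^t}$ is an earlier master iterate) and a symmetric positive definite matrix $\tilde B_i^t=\tilde B_i^{t-d_i^t}$ (its Hessian approximation of $f_i$, which in L-DQN is produced by limited-memory BFGS updates with memory $m$ and scaling $\gamma_i=\|y_i\|^2/(y_i^\top s_i)$, $s_i=x-z_i$, $y_i=\nabla f_i(x)-\nabla f_i(z_i)$; only the spectral hypothesis in the claim is used about these matrices). Initially $z_i^0=x^0$. The master update is $$x^{t+1}=\big(\tilde B^t\big)^{-1}\Big[\sum_{i=1}^n \tilde B_i^t z_i^t-\eta_t\sum_{i=1}^n\nabla f_i(z_i^t)\Big],\qquad \tilde B^t:=\sum_{i=1}^n\tilde B_i^t .$$ Epochs: $E_1=0$ and $E_{m+1}=\min\{t:\ t-D_i^t\ge E_m \text{ for all } i=1,\dots,n\}$, i.e. $E_{m+1}$ is the first time $t$ such that every worker has made at least two updates in $[E_m,t]$. $I_d$ is the $d\times d$ identity, $\preceq$ the Loewner order, $\|\cdot\|$ the Euclidean norm. *)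

(* Defs.v *)
From HB Require Import structures.
From mathcomp Require Import all_boot all_order all_algebra.
From mathcomp Require Import all_classical all_reals all_analysis.

Set Implicit Arguments.
Unset Strict Implicit.
Unset Printing Implicit Defensive.

Import Order.TTheory GRing.Theory Num.Theory.
Import numFieldNormedType.Exports.
Local Open Scope ring_scope.

Section LinAlg.
Variable R : realType.

Definition vdot d (u v : 'cV[R]_d) : R := (u^T *m v) 0 0.
Definition enorm d (v : 'cV[R]_d) : R := Num.sqrt (vdot v v).

Definition qform d (A : 'M[R]_d) (v : 'cV[R]_d) : R := (v^T *m A *m v) 0 0.
Definition loewner_le d (A B : 'M[R]_d) : Prop := forall v, qform A v <= qform B v.
Definition sym_posdef d (A : 'M[R]_d) : Prop :=
  A^T = A /\ forall v, v != 0 -> 0 < qform A v.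

Definition is_inv_sqrt d (A S : 'M[R]_d) : Prop := sym_posdef S /\ S *m S = invmx A.

Definition twice_cont_diff d (f : 'cV[R]_d -> R) (g : 'cV[R]_d -> 'cV[R]_d)
    (H : 'cV[R]_d -> 'M[R]_d) : Prop :=
  (forall x, differentiable f x /\ forall h, 'd f x h = vdot (g x) h) /\
  (forall x, differentiable g x /\ forall h, 'd g x h = H x *m h) /\
  continuous H.

Definition avgf n d (f : 'I_n -> 'cV[R]_d -> R) (y : 'cV[R]_d) : R :=
  (n%:R)^-1 * \sum_(i < n) f i y.

End LinAlg.

Section Async.
Local Open Scope nat_scope.
Variable n : nat.
(* sched t = i_t, the worker that communicates with the master at time t *)
Implicit Types (sched : nat -> 'I_n) (i : 'I_n) (t : nat).

Fixpoint lastex sched i t : option nat :=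
  match t with
  | 0 => if sched 0 == i then Some 0 else None
  | t'.+1 => if sched t'.+1 == i then Some t'.+1 else lastex sched i t'
  end.

(* delay d_i^t : last exchange at time t - d_i^t (None: no exchange yet) *)
Definition delay sched i t : option nat := omap (fun s => t - s) (lastex sched i t).

(* double delay D_i^t := d_i^t + d_i^{t - d_i^t - 1} + 1 *)
Definition ddelay sched i t : option nat :=
  match delay sched i t with
  | Some dt =>
      match t - dt with
      | 0 => None
      | k.+1 => omap (fun d' => dt + d' + 1) (delay sched i k)
      end
  | None => None
  end.

(* index of the master iterate at which the information of worker i that the
   master uses at time t was computed: x^{t - D_i^t + 1} (the iterate sent to
   worker i at its second-to-last exchange), or x^0 if worker i has not yet
   exchanged twice. *)
Definition info_time sched i t : nat :=
  match ddelay sched i t with Some D => (t - D).+1 | None => 0 end.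

(* every worker made at least two updates in [e, t], i.e. t - D_i^t >= e *)
Definition two_updates_since sched e t : Prop :=
  forall i, exists D, ddelay sched i t = Some D /\ (e <= t - D)%N.

(* epoch_start sched m e  <->  E_m = e  (E_1 = 0, E_{m+1} = min{t | t - D_i^t >= E_m forall i}) *)
Inductive epoch_start sched : nat -> nat -> Prop :=
| epoch_start1 : epoch_start sched 1 0
| epoch_startS m e t : epoch_start sched m e -> two_updates_since sched e t ->
    (forall s, (s < t)%N -> ~ two_updates_since sched e s) ->
    epoch_start sched m.+1 t.

(* t is in [E_m, E_{m+1})  (E_{m+1} = +infinity if the minimum does not exist) *)
Definition in_epoch sched m t : Prop :=
  exists e, epoch_start sched m e /\ (e <= t)%N /\
    forall s, (s <= t)%N -> ~ two_updates_since sched e s.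

End Async.

Section Master.
Variables (R : realType) (n d : nat).

Definition zloc (sched : nat -> 'I_n) (x : nat -> 'cV[R]_d) (i : 'I_n) (t : nat) : 'cV[R]_d :=
  x (info_time sched i t).

Definition ldqn_master_updates (sched : nat -> 'I_n) (x : nat -> 'cV[R]_d)
    (B : 'I_n -> nat -> 'M[R]_d) (grad : 'I_n -> 'cV[R]_d -> 'cV[R]_d) (eta : R) : Prop :=
  forall t, x t.+1 = invmx (\sum_(i < n) B i t) *m
      (\sum_(i < n) B i t *m zloc sched x i t - eta *: \sum_(i < n) grad i (zloc sched x i t)).

End Master.

(* Main.v *)
Require Import Defs.
From HB Require Import structures.
From mathcomp Require Import all_boot all_order all_algebra.
From mathcomp Require Import all_classical all_reals all_analysis.
From mathcomp Require Import ring lra zify.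

Import Order.TTheory GRing.Theory Num.Theory.
Import numFieldNormedType.Exports.
Local Open Scope ring_scope.
Local Open Scope classical_set_scope.
Local Open Scope ring_scope.

Section S0.
Variable R : realType.
Lemma line_is_derive (W : normedModType R) (d : nat) (F : 'cV[R]_d -> W) a v s D :
 differentiable F (a + s *: v) -> 'd F (a + s *: v) v = D ->
 is_derive s 1 (fun u : R => F (a + u *: v)) D.
Proof.
move=> dF eD.
pose k := fun u : R => a + u *: v.
have hk : is_diff s k (fun u : R => u *: v).
  rewrite /k.
  have -> : (fun u : R => u *: v) = (0 : R -> 'cV[R]_d) + ( *:%R ^~ v).
    by apply/funext => u /=; rewrite add0r.
  exact: is_diffD.
have dk : differentiable k s by exact: ex_diff.
have dFk : differentiable (F \o k) s by apply: differentiable_comp.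
have -> : (fun u : R => F (a + u *: v)) = F \o k by [].
apply: DeriveDef; first exact: diff_derivable.
rewrite deriveE // diff_comp // /= diff_val scale1r //.
Qed.
End S0.
Section S.
Variable R : realType.
Lemma lin_derive (a s : R) : is_derive s 1 (fun u : R => a * u) a.
Proof.
have h := is_deriveZ a (is_derive_id s (1:R)).
have e : a *: (1:R) = a by rewrite /GRing.scale /= mulr1.
rewrite -[X in is_derive _ _ _ X]e.
exact: h.
Qed.

Lemma sq_derive (a s : R) : is_derive s 1 (fun u : R => a * (u * u)) (a * (s + s)).
Proof.
have h := is_deriveZ a (is_deriveM (is_derive_id s (1:R)) (is_derive_id s (1:R))).
have e : a *: (s *: (1:R) + s *: 1) = a * (s + s).
  by rewrite /GRing.scale /= !mulr1.
rewrite -[X in is_derive _ _ _ X]e.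
exact: h.
Qed.

Lemma taylor_lb (p p1 p2 : R -> R) (al : R) :
  (forall s : R, is_derive s (1:R) p (p1 s)) -> (forall s : R, is_derive s (1:R) p1 (p2 s)) ->
  (forall s : R, al <= p2 s) -> p 0 + p1 0 + al / 2 <= p 1.
Proof.
move=> dp dp1 hal.
pose q1 := fun s => p1 s - al * s.
have dq1 : forall s : R, is_derive s 1 q1 (p2 s - al).
  move=> s; have := is_deriveB (dp1 s) (lin_derive al s). by [].
pose q := fun s => p s - al / 2 * (s * s).
have dq : forall s : R, is_derive s 1 q (q1 s).
  move=> s.
  have h : is_derive s 1 q (p1 s - al/2*(s+s)) := is_deriveB (dp s) (sq_derive (al/2) s).
  apply: (is_derive_eq h).
  rewrite /q1; congr (_ - _); by rewrite mulrDr -mulrDl -splitr.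
have cq : {within `[0, 1], continuous q}.
  apply: derivable_within_continuous => u _. exact: ex_derive.
have cq1 : forall a b : R, {within `[a, b], continuous q1}.
  move=> a b; apply: derivable_within_continuous => u _. exact: ex_derive.
have [c c01 hc] := MVT (ltr01 : (0:R) < 1) (fun s _ => dq s) cq.
have : q1 0 <= q1 c.
  have c0 : 0 < c by move: c01; rewrite in_itv /= => /andP[].
  have [c' _ hc'] := MVT c0 (fun s _ => dq1 s) (cq1 _ _).
  rewrite -subr_ge0 hc'; apply: mulr_ge0; first by rewrite subr_ge0.
  rewrite subr_ge0; exact: ltW.
move: hc; rewrite /q /q1 /= => hc.
lra.
Qed.

Lemma lin_comp_derive (W : normedModType R) (l : {linear W -> R}) (G : R -> W) s D :
  continuous l -> is_derive s (1:R) G D -> is_derive s (1:R) (fun u => l (G u)) (l D).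
Proof.
move=> cl dG.
have dGs : differentiable G s by apply/derivable1_diffP; exact: ex_derive.
have dl : differentiable l (G s) by exact: linear_differentiable.
have dlG : differentiable (l \o G) s by exact: differentiable_comp.
have -> : (fun u => l (G u)) = l \o G by [].
apply: DeriveDef; first exact: diff_derivable.
rewrite deriveE // diff_comp // /= diff_lin // -deriveE //.
by rewrite derive_val.
Qed.

Lemma coord_derive d (G : R -> 'cV[R]_d) s D k :
  is_derive s (1:R) G D -> is_derive s (1:R) (fun u => G u k 0) (D k 0).
Proof.
move=> dG.
have @f : {linear 'cV[R]_d -> R}.
  by exists (fun N : 'M[R]_(_, _) => N k 0); do 2![eexists]; do ?[constructor];
     rewrite ?mxE// => ? *; rewrite ?mxE//; move=> ?; rewrite !mxE.
have := @lin_comp_derive _ f G s D (@coord_continuous R d 1 k 0) dG.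
by [].
Qed.
End S.
Section S2.
Variable R : realType.

Lemma vdotE' d (w v : 'cV[R]_d) : vdot w v = \sum_j v j 0 * w j 0.
Proof. rewrite /vdot !mxE; apply: eq_bigr => j _; by rewrite mxE mulrC. Qed.

Lemma vdot_derive d (G : R -> 'cV[R]_d) s D v :
  is_derive s (1:R) G D -> is_derive s (1:R) (fun u => vdot (G u) v) (vdot D v).
Proof.
move=> dG.
have e : (fun u => vdot (G u) v) = \sum_(j < d) (fun u => v j 0 * G u j 0).
  apply/funext => u; rewrite vdotE' fct_sumE //.

rewrite e vdotE'.
apply: is_derive_sum => j.
have h := is_deriveZ (v j 0) ((@coord_derive _ _ G s D j dG)). exact: h.
Qed.
End S2.
Section S3.
Variable R : realType.

Lemma taylor_vec_lb d (f : 'cV[R]_d -> R) g H a v lo :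
  twice_cont_diff f g H -> (forall y, lo <= vdot (H y *m v) v) ->
  f a + vdot (g a) v + lo / 2 <= f (a + v).
Proof.
move=> [df [dg _]] hlo.
have h := @taylor_lb R (fun u => f (a + u *: v)) (fun u => vdot (g (a + u *: v)) v)
   (fun u => vdot (H (a + u *: v) *m v) v) lo.
rewrite /= !scale0r !scale1r !addr0 in h.
apply: h => // s.
- apply: line_is_derive; first exact: (df _).1.
  exact: (df _).2.
- apply: vdot_derive.
  apply: line_is_derive; first exact: (dg _).1.
  exact: (dg _).2.
Qed.

Lemma taylor_vec_ub d (f : 'cV[R]_d -> R) g H a v hi :
  twice_cont_diff f g H -> (forall y, vdot (H y *m v) v <= hi) ->
  f (a + v) <= f a + vdot (g a) v + hi / 2.
Proof.
move=> [df [dg _]] hhi.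
have h := @taylor_lb R (fun u => - f (a + u *: v)) (fun u => - vdot (g (a + u *: v)) v)
   (fun u => - vdot (H (a + u *: v) *m v) v) (- hi).
rewrite /= !scale0r !scale1r !addr0 in h.
have : - f a + - vdot (g a) v + - hi / 2 <= - f (a + v).
  apply: h => // [s|s|s]; last by rewrite lerN2.
  - apply: is_deriveN. apply: line_is_derive; first exact: (df _).1.
    exact: (df _).2.
  - apply: is_deriveN. apply: vdot_derive.
    apply: line_is_derive; first exact: (dg _).1.
    exact: (dg _).2.
rewrite mulNr; lra.
Qed.
End S3.
Section LA.
Context {R : realType}.
Context {d : nat}.
Implicit Types (u v w : 'cV[R]_d) (A : 'M[R]_d).

Lemma vdotE u v : vdot u v = \sum_j u j 0 * v j 0.
Proof. rewrite /vdot !mxE; apply: eq_bigr => j _; by rewrite mxE. Qed.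

Lemma vdotC u v : vdot u v = vdot v u.
Proof. rewrite !vdotE; apply: eq_bigr => j _; by rewrite mulrC. Qed.

Lemma vdotDl u v w : vdot (u + v) w = vdot u w + vdot v w.
Proof. rewrite !vdotE -big_split /=; apply: eq_bigr => j _; by rewrite mxE mulrDl. Qed.

Lemma vdotDr u v w : vdot w (u + v) = vdot w u + vdot w v.
Proof. by rewrite vdotC vdotDl !(vdotC w). Qed.

Lemma vdotZl a u v : vdot (a *: u) v = a * vdot u v.
Proof. rewrite !vdotE mulr_sumr; apply: eq_bigr => j _; by rewrite mxE mulrA. Qed.

Lemma vdotZr a u v : vdot v (a *: u) = a * vdot v u.
Proof. by rewrite vdotC vdotZl vdotC. Qed.

Lemma vdotNl u v : vdot (- u) v = - vdot u v.
Proof. by rewrite -scaleN1r vdotZl mulN1r. Qed.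

Lemma vdotNr u v : vdot v (- u) = - vdot v u.
Proof. by rewrite vdotC vdotNl vdotC. Qed.

Lemma vdotBl u v w : vdot (u - v) w = vdot u w - vdot v w.
Proof. by rewrite vdotDl vdotNl. Qed.

Lemma vdotBr u v w : vdot w (u - v) = vdot w u - vdot w v.
Proof. by rewrite vdotDr vdotNr. Qed.

Lemma vdot0l v : vdot 0 v = 0.
Proof. by rewrite -(scale0r 0) vdotZl mul0r. Qed.

Lemma vdot0r v : vdot v 0 = 0.
Proof. by rewrite vdotC vdot0l. Qed.

Lemma vdot_suml I (r : seq I) (P : pred I) (F : I -> 'cV[R]_d) v :
  vdot (\sum_(i <- r | P i) F i) v = \sum_(i <- r | P i) vdot (F i) v.
Proof.
elim/big_rec2: _ => [|i y1 y2 _ <-]; first exact: vdot0l.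
by rewrite vdotDl.
Qed.

Lemma vdot_mul A u v : vdot (A *m u) v = vdot u (A^T *m v).
Proof. by rewrite /vdot trmx_mul mulmxA. Qed.

Lemma vdot_mulsym A u v : A^T = A -> vdot (A *m u) v = vdot u (A *m v).
Proof. by move=> hA; rewrite vdot_mul hA. Qed.

Lemma vdot_ge0 v : 0 <= vdot v v.
Proof. rewrite vdotE; apply: sumr_ge0 => j _; exact: sqr_ge0. Qed.

Lemma vdot_eq0 v : vdot v v = 0 -> v = 0.
Proof.
rewrite vdotE => /eqP; rewrite psumr_eq0 => [/allP h|j _]; last exact: sqr_ge0.
apply/matrixP => j k; rewrite (ord1 k) mxE.
have := h j (mem_index_enum j); rewrite /= mulf_eq0 orbb => /eqP //.
Qed.

Lemma qformE A v : qform A v = vdot (A *m v) v.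
Proof.
by rewrite vdotC /qform /vdot mulmxA.
Qed.

Lemma enorm_sq v : enorm v ^+ 2 = vdot v v.
Proof. by rewrite /enorm sqr_sqrtr // vdot_ge0. Qed.

End LA.
Section LA2.
Context {R : realType}.
Context {d : nat}.
Implicit Types (u v w : 'cV[R]_d) (A : 'M[R]_d).

Lemma pos_unit A : (forall v, v != 0 -> 0 < vdot (A *m v) v) -> A \in unitmx.
Proof.
move=> hA; rewrite unitmxE unitfE; apply/negP => /det0P [w w0 hw].
have := hA w^T; rewrite trmx_eq0 => /(_ w0).
by rewrite vdotC /vdot trmxK mulmxA hw mul0mx mxE ltxx.
Qed.

Lemma posdef_unit A : sym_posdef A -> A \in unitmx.
Proof. move=> [_ h]; apply: pos_unit => v /h; by rewrite qformE. Qed.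

Lemma hess_bounds B S H (lo hi : R) :
  sym_posdef B -> is_inv_sqrt B S ->
  loewner_le (lo%:M) (S *m H *m S) -> loewner_le (S *m H *m S) (hi%:M) ->
  forall v, lo * vdot (B *m v) v <= vdot (H *m v) v /\ vdot (H *m v) v <= hi * vdot (B *m v) v.
Proof.
move=> hB [[hS _] hSS] hlo hhi v.
have uB := posdef_unit B hB.
have Sw : S *m (S *m (B *m v)) = v by rewrite mulmxA hSS mulKmx.
have e1 : qform (S *m H *m S) (S *m (B *m v)) = vdot (H *m v) v.
  by rewrite qformE -!mulmxA Sw vdot_mul hS Sw.
have e2 : forall c : R, qform (c%:M) (S *m (B *m v)) = c * vdot (B *m v) v.
  move=> c; rewrite qformE mul_scalar_mx vdotZl vdot_mul hS Sw.
  by rewrite vdotC.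
split.
- by rewrite -e1 -e2; apply: hlo.
- by rewrite -e1 -e2; apply: hhi.
Qed.
End LA2.
Lemma arith_contract (R : realType) (m M eta Q P0 c : R) :
  0 < m -> m < M -> 0 < eta -> eta * (M + m) <= 2 -> 0 <= Q ->
  0 <= P0 - 2 * m * c + m * m * Q -> m * Q <= c -> P0 + m * M * Q <= (M + m) * c ->
  Q - 2 * eta * c + eta * eta * P0 <= (1 - eta * m) ^+ 2 * Q.
Proof.
move=> m0 mM eta0 k hQ hP hs hc.
have Mm0 : 0 < M + m by lra.
have hP0 : m * m * Q <= P0.
  have t0 : 0 <= m * (c - m * Q) by apply: mulr_ge0; lra.
  lra.
have t1 : 0 <= eta * (2 - eta * (M + m)) * (P0 - m * m * Q).
  apply: mulr_ge0; first apply: mulr_ge0; lra.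
have s1 : 2 * eta * (P0 + m * M * Q) <= 2 * eta * ((M + m) * c).
  by apply: ler_wpM2l => //; lra.
rewrite -(ler_pM2l Mm0).
nra.
Qed.
Section Coco.
Variable R : realType.
Variable d : nat.
Variable B : 'M[R]_d.
Hypothesis Bsym : B^T = B.
Hypothesis Bunit : B \in unitmx.
Let Bi := invmx B.
Let qB (v : 'cV[R]_d) := vdot (B *m v) v.
Let P (v : 'cV[R]_d) := vdot (Bi *m v) v.

Lemma Bisym : Bi^T = Bi.
Proof. by rewrite /Bi trmx_inv Bsym. Qed.

Lemma qB_Bi v : qB (Bi *m v) = P v.
Proof. by rewrite /qB /P mulmxA mulmxV // mul1mx vdotC. Qed.

Lemma qBZ a v : qB (a *: v) = a * a * qB v.
Proof. by rewrite /qB -scalemxAr vdotZl vdotZr mulrA. Qed.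

Lemma PZ a v : P (a *: v) = a * a * P v.
Proof. by rewrite /P -scalemxAr vdotZl vdotZr mulrA. Qed.

Lemma qBD a v : qB (a + v) = qB a + 2 * vdot (B *m a) v + qB v.
Proof.
rewrite /qB mulmxDr !vdotDl !vdotDr (vdotC (B *m v) a) -vdot_mulsym //.
by rewrite (vdotC (B *m v)); ring.
Qed.

Lemma qBN v : qB (- v) = qB v.
Proof. by rewrite -scaleN1r qBZ mulrNN !mul1r. Qed.

Lemma PN v : P (- v) = P v.
Proof. by rewrite -scaleN1r PZ mulrNN !mul1r. Qed.

(* Baillon-Haddad step *)
Lemma bh_step (h : 'cV[R]_d -> R) (gh : 'cV[R]_d -> 'cV[R]_d) (L : R) :
  0 < L ->
  (forall a v, h a + vdot (gh a) v <= h (a + v)) ->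
  (forall a v, h (a + v) <= h a + vdot (gh a) v + L / 2 * qB v) ->
  forall x y, h x + vdot (gh x) (y - x) + P (gh y - gh x) / (2 * L) <= h y.
Proof.
move=> L0 H1 H2 x y.
set G := gh y - gh x.
set v := (- L^-1) *: (Bi *m G).
have h1 := H1 x (y + v - x).
rewrite [x + _]addrC subrK in h1.
have h2 := H2 y v.
have e1 : vdot (gh x) (y + v - x) = vdot (gh x) (y - x) + vdot (gh x) v.
  by rewrite !vdotBr vdotDr; ring.
have e2 : vdot (gh y) v - vdot (gh x) v = - (L^-1 * P G).
  rewrite -vdotBl -/G /v vdotZr /P vdotC; ring.
have e3 : qB v = L^-1 * L^-1 * P G.
  by rewrite /v qBZ qB_Bi mulrNN.
have e4 : L / 2 * (L^-1 * L^-1 * P G) = P G / (2 * L).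
  by field; rewrite gt_eqF.
have e5 : L^-1 * P G = 2 * (P G / (2 * L)).
  by field; rewrite gt_eqF.
rewrite e1 e3 e4 in h1 h2.
lra.
Qed.
Hypothesis Bpsd : forall v : 'cV[R]_d, 0 <= vdot (B *m v) v.
Variables (f : 'cV[R]_d -> R) (g : 'cV[R]_d -> 'cV[R]_d) (m M : R).
Hypothesis m0 : 0 < m.
Hypothesis mM : m < M.
Hypothesis F1 : forall a v, f a + vdot (g a) v + m / 2 * qB v <= f (a + v).
Hypothesis F2 : forall a v, f (a + v) <= f a + vdot (g a) v + M / 2 * qB v.

Lemma strong_mono x y : m * qB (y - x) <= vdot (g y - g x) (y - x).
Proof.
have h1 := F1 x (y - x).
have h2 := F1 y (x - y).
rewrite [x + _]addrC subrK in h1.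
rewrite [y + _]addrC subrK in h2.
have e : qB (x - y) = qB (y - x) by rewrite -opprB qBN.
have e2 : vdot (g y) (x - y) = - vdot (g y) (y - x) by rewrite -vdotNr opprB.
rewrite e e2 in h2; rewrite vdotBl; lra.
Qed.

Lemma smooth_mono x y : vdot (g y - g x) (y - x) <= M * qB (y - x).
Proof.
have h1 := F2 x (y - x).
have h2 := F2 y (x - y).
rewrite [x + _]addrC subrK in h1.
rewrite [y + _]addrC subrK in h2.
have e : qB (x - y) = qB (y - x) by rewrite -opprB qBN.
have e2 : vdot (g y) (x - y) = - vdot (g y) (y - x) by rewrite -vdotNr opprB.
rewrite e e2 in h2; rewrite vdotBl; lra.
Qed.

Lemma coco x y :
  P (g y - g x) + m * M * qB (y - x) <= (M + m) * vdot (g y - g x) (y - x).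
Proof.
pose h z := f z - m / 2 * qB z.
pose gh z := g z - m *: (B *m z).
have H1 : forall a v, h a + vdot (gh a) v <= h (a + v).
  move=> a v; have := F1 a v; rewrite /h /gh qBD // vdotBl vdotZl; lra.
have H2 : forall a v, h (a + v) <= h a + vdot (gh a) v + (M - m) / 2 * qB v.
  move=> a v; have := F2 a v; rewrite /h /gh qBD // vdotBl vdotZl; lra.
have L0 : 0 < M - m by rewrite subr_gt0.
have b1 := @bh_step h gh (M - m) L0 H1 H2 x y.
have b2 := @bh_step h gh (M - m) L0 H1 H2 y x.
set e := y - x. set dl := g y - g x.
have eG : gh y - gh x = dl - m *: (B *m e).
  rewrite /gh /dl /e mulmxBr; apply/matrixP => i j; rewrite !mxE; ring.
have eG' : gh x - gh y = - (gh y - gh x).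
  exact: (esym (opprB _ _)).
rewrite eG' PN in b2.
have exy : x - y = - e by rewrite /e opprB.
rewrite exy vdotNr in b2.
have k1 : P (gh y - gh x) / (2 * (M - m)) + P (gh y - gh x) / (2 * (M - m))
    <= vdot (gh y - gh x) e.
  rewrite vdotBl; lra.
have k2 : P (gh y - gh x) <= (M - m) * vdot (gh y - gh x) e.
  have -> : P (gh y - gh x) = (M - m) * (P (gh y - gh x) / (2 * (M - m)) +
      P (gh y - gh x) / (2 * (M - m))).
    by field; rewrite gt_eqF.
  by apply: ler_wpM2l => //; exact: ltW.
rewrite eG in k2.
clearbody e dl.
have e1 : vdot (dl - m *: (B *m e)) e = vdot dl e - m * qB e by rewrite vdotBl vdotZl.
have e2 : P (dl - m *: (B *m e)) = P dl - 2 * m * vdot dl e + m * m * qB e.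
  rewrite /P mulmxBr vdotBl !vdotBr -scalemxAr !vdotZl !vdotZr.
  rewrite mulmxA mulVmx // mul1mx.
  have -> : vdot (Bi *m dl) (B *m e) = vdot dl e.
    by rewrite vdot_mul Bisym mulmxA mulVmx // mul1mx.
  rewrite /qB (vdotC e dl) (vdotC e (B *m e)); ring.
rewrite e1 e2 in k2.
lra.
Qed.

Lemma cs_ineq u y : 2 * vdot y u <= qB u + P y.
Proof.
have h : 0 <= qB (u - Bi *m y) := Bpsd _.
rewrite qBD qBN qB_Bi vdotNr vdot_mulsym // mulmxA mulmxV // mul1mx (vdotC u y) in h.
lra.
Qed.

Lemma P_ge0 v : 0 <= P v.
Proof. rewrite -qB_Bi; exact: Bpsd. Qed.

Lemma contract x y (eta : R) : 0 < eta -> eta <= 2 / (M + m) ->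
  P (B *m (y - x) - eta *: (g y - g x)) <= (1 - eta * m) ^+ 2 * qB (y - x).
Proof.
move=> eta0 etaM.
have hs := strong_mono x y.
have hc := coco x y.
set e := y - x in hs hc *. set dl := g y - g x in hs hc *.
clearbody e dl.
have hQ : 0 <= qB e by exact: Bpsd.
have hP := P_ge0 (dl - m *: (B *m e)).
have e2 : P (dl - m *: (B *m e)) = P dl - 2 * m * vdot dl e + m * m * qB e.
  rewrite /P mulmxBr vdotBl !vdotBr -scalemxAr !vdotZl !vdotZr.
  rewrite mulmxA mulVmx // mul1mx.
  have -> : vdot (Bi *m dl) (B *m e) = vdot dl e.
    by rewrite vdot_mul Bisym mulmxA mulVmx // mul1mx.
  rewrite /qB (vdotC e dl) (vdotC e (B *m e)); ring.
have e3 : P (B *m e - eta *: dl) = qB e - 2 * eta * vdot dl e + eta * eta * P dl.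
  rewrite /P mulmxBr vdotBl !vdotBr -scalemxAr !vdotZl !vdotZr.
  rewrite mulmxA mulVmx // mul1mx.
  have -> : vdot (Bi *m dl) (B *m e) = vdot dl e.
    by rewrite vdot_mul Bisym mulmxA mulVmx // mul1mx.
  rewrite /qB (vdotC e dl) (vdotC e (B *m e)); ring.
rewrite e2 in hP; rewrite e3.
set Q := qB e in hQ hP hs hc *. set P0 := P dl in hP hc *. set c := vdot dl e in hP hs hc *.

have k : eta * (M + m) <= 2.
  have Mm0 : 0 < M + m by apply: addr_gt0 => //; exact: lt_trans m0 mM.
  by move: etaM; rewrite ler_pdivlMr // mulrC.
exact: arith_contract m0 mM eta0 k hQ hP hs hc.
Qed.
End Coco.
Section Step.
Context {R : realType} {n d : nat}.
Variables (Bs : 'I_n -> 'M[R]_d) (gs : 'I_n -> 'cV[R]_d -> 'cV[R]_d) (z : 'I_n -> 'cV[R]_d).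
Variables (xs xn : 'cV[R]_d) (eta m M mu L C r : R).
Hypothesis n0 : (0 < n)%N.
Hypothesis Bsym : forall i, (Bs i)^T = Bs i.
Hypothesis Bunit : forall i, Bs i \in unitmx.
Hypothesis Bpsd : forall i v, 0 <= vdot (Bs i *m v) v.
Hypothesis mu0 : 0 < mu.
Hypothesis M0 : 0 < M.
Hypothesis m0 : 0 < m.
Hypothesis L0 : 0 <= L.
Hypothesis lowB : forall i v, mu / M * vdot v v <= vdot (Bs i *m v) v.
Hypothesis upB : forall i v, vdot (Bs i *m v) v <= L / m * vdot v v.
Let y i := Bs i *m (z i - xs) - eta *: (gs i (z i) - gs i xs).
Hypothesis hcon : forall i, vdot (invmx (Bs i) *m y i) (y i) <=
   r ^+ 2 * vdot (Bs i *m (z i - xs)) (z i - xs).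
Hypothesis hg0 : \sum_i gs i xs = 0.
Hypothesis hxn : xn = invmx (\sum_i Bs i) *m (\sum_i Bs i *m z i - eta *: \sum_i gs i (z i)).
Hypothesis hC : forall i, vdot (z i - xs) (z i - xs) <= C ^+ 2.

Lemma step_bound : vdot (xn - xs) (xn - xs) <= r ^+ 2 * (L / m) * (M / mu) * C ^+ 2.
Proof.
set Bt := \sum_i Bs i.
have sc : forall c : R, \sum_(i < n) c = n%:R * c.
  by move=> c; rewrite sumr_const card_ord mulr_natl.
have qBt : forall v, vdot (Bt *m v) v = \sum_i vdot (Bs i *m v) v.
  by move=> v; rewrite /Bt mulmx_suml vdot_suml.
have nR : (0 : R) < n%:R by rewrite ltr0n.
have lowBt : forall v, n%:R * (mu / M * vdot v v) <= vdot (Bt *m v) v.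
  move=> v; rewrite qBt -sc.
  by apply: ler_sum => i _; exact: lowB.
have Btunit : Bt \in unitmx.
  apply: pos_unit => v v0; apply: lt_le_trans (lowBt v).
  apply: mulr_gt0 => //; apply: mulr_gt0; first exact: divr_gt0.
  rewrite lt_def vdot_ge0 andbT; apply/eqP => /vdot_eq0; exact/eqP.
set u := xn - xs.
have eBu : Bt *m u = \sum_i y i.
  rewrite /u mulmxBr hxn mulKVmx // /y sumrB -scaler_sumr sumrB hg0 subr0.
  rewrite /Bt mulmx_suml.
  have -> : \sum_i Bs i *m (z i - xs) = \sum_i Bs i *m z i - \sum_i Bs i *m xs.
    by rewrite -sumrB; apply: eq_bigr => i _; rewrite mulmxBr.
  by rewrite addrAC.
have h1 : vdot (Bt *m u) u <= \sum_i vdot (invmx (Bs i) *m y i) (y i).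
  have h2 : 2 * vdot (Bt *m u) u <= vdot (Bt *m u) u + \sum_i vdot (invmx (Bs i) *m y i) (y i).
    rewrite {1}eBu vdot_suml mulr_sumr qBt -big_split /=.
    by apply: ler_sum => i _; apply: cs_ineq.
  lra.
have h3 : \sum_i vdot (invmx (Bs i) *m y i) (y i) <= n%:R * (r ^+ 2 * (L / m * C ^+ 2)).
  rewrite -sc.
  apply: ler_sum => i _; apply: le_trans (hcon i) _.
  apply: ler_wpM2l; first exact: sqr_ge0.
  apply: le_trans (upB _ _) _; apply: ler_wpM2l; [exact: divr_ge0 (ltW m0) | exact: hC].
have h4 := le_trans (lowBt u) (le_trans h1 h3).
have h5 : mu / M * vdot u u <= r ^+ 2 * (L / m * C ^+ 2).
  by rewrite -(ler_pM2l nR).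
have -> : r ^+ 2 * (L / m) * (M / mu) * C ^+ 2 = (M / mu) * (r ^+ 2 * (L / m * C ^+ 2)).
  by rewrite !mulrA; ring.
have -> : vdot u u = (M / mu) * (mu / M * vdot u u).
  by field; rewrite !gt_eqF.
by apply: ler_wpM2l => //; apply: divr_ge0; apply: ltW.
Qed.
End Step.
From mathcomp Require Import zify.
Section Comb.
Local Open Scope nat_scope.
Context {n : nat} (sched : nat -> 'I_n) (i : 'I_n).

Lemma lastex_spec {t s} : lastex sched i t = Some s -> sched s = i /\ s <= t.
Proof.
elim: t => [|t IH] /=.
  by case: eqP => // h [<-].
case: eqP => [h [<-] //|_ /IH [h1 h2]]; split => //; lia.
Qed.

Lemma lastex_ge {t u} : sched u = i -> u <= t -> exists s, lastex sched i t = Some s /\ u <= s.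
Proof.
move=> hu; elim: t => [|t IH] /=.
  rewrite leqn0 => /eqP eu; subst u; rewrite hu eqxx; by exists 0.
move=> ut; case: eqP => [_|hne]; first by exists t.+1.
have ut' : u <= t.
  rewrite leq_eqVlt in ut; case/orP: ut => [/eqP eu|//]; subst u; by case: hne.
by apply: IH.
Qed.

Lemma ddelay_spec {t D} : ddelay sched i t = Some D ->
  exists k s', [/\ lastex sched i t = Some k.+1, lastex sched i k = Some s' & t - D = s'].
Proof.
rewrite /ddelay /delay.
case e1: (lastex sched i t) => [s|] //=.
have [_ st] := lastex_spec e1.
have -> : t - (t - s) = s by lia.
case: s e1 st => [|k] // e1 st.
case e2: (lastex sched i k) => [s'|] //= [<-].
have [_ sk] := lastex_spec e2.
exists k, s'; split => //; lia.
Qed.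

Lemma info_time_le t : info_time sched i t <= t.
Proof.
rewrite /info_time; case e: (ddelay sched i t) => [D|] //.
have [k [s' [e1 e2 e3]]] := ddelay_spec e.
have [_ h1] := lastex_spec e1; have [_ h2] := lastex_spec e2; lia.
Qed.

Lemma info_time_mono t t' D e : ddelay sched i t = Some D -> e <= t - D -> t <= t' ->
  e < info_time sched i t'.
Proof.
move=> hD he tt'.
have [k [s' [e1 e2 e3]]] := ddelay_spec hD.
have [h1 h1'] := lastex_spec e1; have [h2 h2'] := lastex_spec e2.
have [s2 [f1 f1']] := lastex_ge h1 (leq_trans h1' tt').
have [_ s2t] := lastex_spec f1.
destruct s2 as [|k2]; first lia.
have sk2 : s' <= k2 by lia.
have [s3 [f2 f2']] := lastex_ge h2 sk2.
have [_ s3k] := lastex_spec f2.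
rewrite /info_time /ddelay /delay f1 /=.
have -> : t' - (t' - k2.+1) = k2.+1 by lia.
rewrite f2 /=.
lia.
Qed.
End Comb.
Lemma r_nonneg (R : realType) (eta ed eu : R) : 0 < eta -> 0 < ed -> ed < eu ->
  eta <= 2 / (ed + eu) -> 0 <= 1 - eta * ed.
Proof.
move=> e0 d0 du hM.
have s0 : 0 < ed + eu by lra.
have k1 : eta * (ed + eu) <= 2 by move: hM; rewrite ler_pdivlMr.
have k2 : eta * ed <= eta * eu by apply: ler_wpM2l; [exact: ltW | exact: ltW].
lra.
Qed.

Lemma rho_lt1 (R : realType) (eta ed w : R) : 0 < ed -> 0 < w ->
  ed^-1 * (1 - w^-1) < eta -> (1 - eta * ed) * w < 1.
Proof.
move=> d0 w0 h.
have k1 : 1 - w^-1 < eta * ed.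
  by move: h; rewrite -(ltr_pM2l d0) mulrA mulfV ?gt_eqF // mul1r mulrC.
have k2 : 1 - eta * ed < w^-1 by lra.
have wn : w != 0 by rewrite gt_eqF.
by rewrite -[X in _ < X](mulVf wn) ltr_pM2r.
Qed.
Lemma key_arith (R : realType) (s g c : R) : 0 < s -> 0 <= g -> 0 <= c ->
  0 <= - (s * g) + s * s * c * g -> g <= s * c * g.
Proof.
move=> s0 g0 c0 h.
have : s * g <= s * (s * c * g) by rewrite !mulrA; lra.
by rewrite ler_pM2l.
Qed.

Lemma sum_grad0 (R : realType) (n d : nat) (f : 'I_n -> 'cV[R]_d -> R)
  (g : 'I_n -> 'cV[R]_d -> 'cV[R]_d) (Bs : 'I_n -> 'M[R]_d) (xs : 'cV[R]_d) (M K : R) :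
  (0 < n)%N -> 0 <= M -> 0 <= K ->
  (forall i a v, f i (a + v) <= f i a + vdot (g i a) v + M / 2 * vdot (Bs i *m v) v) ->
  (forall i v, vdot (Bs i *m v) v <= K * vdot v v) ->
  (forall y, \sum_i f i xs <= \sum_i f i y) ->
  \sum_i g i xs = 0.
Proof.
move=> n0 M0 K0 F2 upB hmin.
set G := \sum_i g i xs.
set c := M / 2 * (n%:R * K).
have c0 : 0 <= c by apply: mulr_ge0; [apply: divr_ge0 | apply: mulr_ge0].
have g0 : 0 <= vdot G G := vdot_ge0 G.
have key : forall s, 0 < s -> vdot G G <= s * c * vdot G G.
  move=> s s0; apply: key_arith => //.
  set v := (- s) *: G.
  have h1 := hmin (xs + v).
  have h2 : \sum_i f i (xs + v) <=
      \sum_i (f i xs + vdot (g i xs) v + M / 2 * vdot (Bs i *m v) v).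
    by apply: ler_sum => i _; apply: F2.
  rewrite big_split big_split /= -vdot_suml -/G -mulr_sumr in h2.
  have h3 : \sum_i vdot (Bs i *m v) v <= s * s * (n%:R * K * vdot G G).
    apply: le_trans (ler_sum _ (fun i _ => upB i v)) _.
    rewrite sumr_const card_ord -mulr_natl /v vdotZl vdotZr.
    rewrite le_eqVlt; apply/orP; left; apply/eqP; ring.
  have hv : vdot G v = - (s * vdot G G) by rewrite /v vdotZr mulNr.
  have h4 : M / 2 * \sum_i vdot (Bs i *m v) v <= M / 2 * (s * s * (n%:R * K * vdot G G)).
    by apply: ler_wpM2l => //; apply: divr_ge0.
  have e : M / 2 * (s * s * (n%:R * K * vdot G G)) = s * s * c * vdot G G.
    by rewrite /c; ring.
  rewrite hv in h2; rewrite e in h4; lra.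
have sp : 0 < (2 * (c + 1))^-1 by rewrite invr_gt0; lra.
have h := key _ sp.
have hc : (2 * (c + 1))^-1 * c <= 1 / 2.
  rewrite mulrC ler_pdivrMr; lra.
have : vdot G G <= 0.
  have : (2 * (c + 1))^-1 * c * vdot G G <= 1 / 2 * vdot G G by apply: ler_wpM2r.
  lra.
move=> hle; apply: vdot_eq0; apply/eqP; by rewrite eq_le hle g0.
Qed.

Local Close Scope classical_set_scope.
Local Open Scope ring_scope.

Lemma sq_le_ge0 (R : realType) (a b : R) : 0 <= a -> 0 <= b -> a ^+ 2 <= b ^+ 2 -> a <= b.
Proof. move=> a0 b0; by rewrite (ler_pXn2r (isT : (0 < 2)%N)) // nnegrE. Qed.

Theorem theorem1 (R : realType) (d n : nat)
  (f : 'I_n -> 'cV[R]_d -> R) (grad : 'I_n -> 'cV[R]_d -> 'cV[R]_d)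
  (hess : 'I_n -> 'cV[R]_d -> 'M[R]_d)
  (mu L : R) (xstar : 'cV[R]_d)
  (sched : nat -> 'I_n) (x : nat -> 'cV[R]_d) (B : 'I_n -> nat -> 'M[R]_d)
  (eta eps_d eps_u : R) :
  (forall i, twice_cont_diff (f i) (grad i) (hess i)) ->
  0 < mu -> mu < L ->
  (forall i (y yh : 'cV[R]_d),
      mu * enorm (y - yh) ^+ 2 <= vdot (grad i y - grad i yh) (y - yh) /\
      vdot (grad i y - grad i yh) (y - yh) <= L * enorm (y - yh) ^+ 2) ->
  (forall y, avgf f xstar <= avgf f y) ->
  (forall i t, sym_posdef (B i t)) ->
  (forall i t dt, delay sched i t = Some dt -> B i t = B i (t - dt)%N) ->
  ldqn_master_updates sched x B grad eta ->
  0 < eps_d -> eps_d < eps_u ->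
  (forall i t, exists S, is_inv_sqrt (B i t) S /\
      forall y, loewner_le (eps_d%:M) (S *m hess i y *m S) /\
                loewner_le (S *m hess i y *m S) (eps_u%:M)) ->
  let kappa := L / mu in
  let eps := eps_u / eps_d in
  eps < (1 + kappa^-1 + Num.sqrt ((1 + kappa^-1) ^+ 2 + 4 / kappa)) / 2 ->
  eps_d^-1 * (1 - (eps * kappa)^-1) < eta -> eta < 2 / (eps_d + eps_u) ->
  exists rho : R, 0 <= rho < 1 /\
    forall m t, in_epoch sched m t ->
      enorm (x t.+1 - xstar) <= rho ^+ m * enorm (x 0%N - xstar).
Proof.
move=> hf mu0 muL hmono hmin hpd _ hupd ed0 edu hS kappa eps _ heta1 heta2.
have n0 : (0 < n)%N by case: (sched 0%N) => k; lia.
have eu0 : 0 < eps_u by exact: lt_trans ed0 edu.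
have L0 : 0 < L by exact: lt_trans mu0 muL.
have eta0 : 0 < eta.
  apply: le_lt_trans heta1; apply: mulr_ge0; first by rewrite invr_ge0 ltW.
  rewrite subr_ge0 invf_le1 /eps /kappa; last by apply: mulr_gt0; apply: divr_gt0.
  have h1 : 1 <= eps_u / eps_d by rewrite ler_pdivlMr // mul1r ltW.
  have h2 : 1 <= L / mu by rewrite ler_pdivlMr // mul1r ltW.
  by rewrite -[1]mulr1; apply: ler_pM.
have etaM : eta <= 2 / (eps_d + eps_u) by exact: ltW.
have Bsym : forall i t, (B i t)^T = B i t by move=> i t; case: (hpd i t).
have Bunit : forall i t, B i t \in unitmx by move=> i t; exact: posdef_unit.
have Bpsd : forall i t v, 0 <= vdot (B i t *m v) v.
  move=> i t v; have [_ hp] := hpd i t.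
  have [->|v0] := eqVneq v 0; first by rewrite mulmx0 vdot0l.
  by rewrite -qformE ltW // hp.
have hb : forall i t y v, eps_d * vdot (B i t *m v) v <= vdot (hess i y *m v) v /\
    vdot (hess i y *m v) v <= eps_u * vdot (B i t *m v) v.
  move=> i t y v; have [S [hSi hl]] := hS i t; have [hl1 hl2] := hl y.
  exact: hess_bounds (hpd i t) hSi hl1 hl2 v.
have F1 : forall i t a v, f i a + vdot (grad i a) v + eps_d / 2 * vdot (B i t *m v) v <= f i (a + v).
  move=> i t a v; rewrite mulrAC; apply: taylor_vec_lb (hf i) _ => y.
  exact: (hb i t y v).1.
have F2 : forall i t a v, f i (a + v) <= f i a + vdot (grad i a) v + eps_u / 2 * vdot (B i t *m v) v.
  move=> i t a v; rewrite mulrAC; apply: taylor_vec_ub (hf i) _ => y.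
  exact: (hb i t y v).2.
have lowB : forall i t v, mu / eps_u * vdot v v <= vdot (B i t *m v) v.
  move=> i t v; have h1 := @smooth_mono _ _ (B i t) (f i) (grad i) eps_u (F2 i t) 0 v.
  have [h2 _] := hmono i v 0.
  rewrite subr0 enorm_sq in h1 h2.
  rewrite mulrAC ler_pdivrMr //; move: (le_trans h2 h1); nra.
have upB : forall i t v, vdot (B i t *m v) v <= L / eps_d * vdot v v.
  move=> i t v; have h1 := @strong_mono _ _ (B i t) (f i) (grad i) eps_d (F1 i t) 0 v.
  have [_ h2] := hmono i v 0.
  rewrite subr0 enorm_sq in h1 h2.
  rewrite mulrAC ler_pdivlMr // mulrC; exact: le_trans h1 h2.
have hg0 : \sum_i grad i xstar = 0.
  have hmin' : forall y, \sum_i f i xstar <= \sum_i f i y.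
    move=> y; have := hmin y; rewrite /avgf.
    have ni : 0 < (n%:R : R)^-1 by rewrite invr_gt0 ltr0n.
    by rewrite ler_pM2l.
  have LK : 0 <= L / eps_d by apply: divr_ge0; apply: ltW.
  exact: (@sum_grad0 R n d f grad (fun i => B i 0%N) xstar eps_u (L / eps_d) n0 (ltW eu0) LK
    (fun i => F2 i 0%N) (fun i => upB i 0%N) hmin').
set r := 1 - eta * eps_d.
set rho := r * (eps * kappa).
have r0 : 0 <= r := @r_nonneg R _ _ _ eta0 ed0 edu etaM.
have rho0 : 0 <= rho.
  by apply: mulr_ge0 => //; apply: mulr_ge0; apply: divr_ge0; apply: ltW.
have w0 : 0 < eps * kappa by apply: mulr_gt0; apply: divr_gt0.
have rho1 : rho < 1 := @rho_lt1 R _ _ _ ed0 w0 heta1.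
set e0 := enorm (x 0%N - xstar).
have step : forall t C, 0 <= C -> (forall i, enorm (x (info_time sched i t) - xstar) <= C) ->
    enorm (x t.+1 - xstar) <= rho * C.
  move=> t C C0 hz.
  have etaM' : eta <= 2 / (eps_u + eps_d) by rewrite addrC.
  have hcon := fun i => @contract _ _ (B i t) (Bsym i t) (Bunit i t) (Bpsd i t) (f i) (grad i)
     eps_d eps_u ed0 edu (F1 i t) (F2 i t) xstar (x (info_time sched i t)) eta eta0 etaM'.
  have hC : forall i, vdot (x (info_time sched i t) - xstar) (x (info_time sched i t) - xstar) <= C ^+ 2.
    move=> i; rewrite -enorm_sq (ler_pXn2r (isT : (0 < 2)%N)) ?nnegrE //.
    by rewrite /enorm sqrtr_ge0.
  have hb2 := @step_bound R n d (fun i => B i t) grad (fun i => x (info_time sched i t))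
     xstar (x t.+1) eta eps_d eps_u mu L C r n0 (fun i => Bsym i t) (fun i => Bunit i t)
     (fun i => Bpsd i t) mu0 eu0 ed0 (ltW L0) (fun i => lowB i t) (fun i => upB i t)
     hcon hg0 (hupd t) hC.
  apply: sq_le_ge0; first by rewrite /enorm sqrtr_ge0.
    by apply: mulr_ge0.
  rewrite enorm_sq; apply: le_trans hb2 _.
  have ew : L / eps_d * (eps_u / mu) = eps * kappa.
    by rewrite /eps /kappa; field; rewrite !gt_eqF.
  have w1 : 1 <= eps * kappa.
    rewrite /eps /kappa -[1]mulr1; apply: ler_pM; rewrite ?ler01 //.
    by rewrite ler_pdivlMr // mul1r ltW.
    by rewrite ler_pdivlMr // mul1r ltW.
  rewrite -[r ^+ 2 * _ * _]mulrA ew.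
  have -> : (rho * C) ^+ 2 = r ^+ 2 * ((eps * kappa) * (eps * kappa)) * C ^+ 2.
    by rewrite /rho; ring.
  apply: ler_wpM2r; first exact: sqr_ge0.
  apply: ler_wpM2l; first exact: sqr_ge0.
  by rewrite -[leLHS]mul1r; apply: ler_wpM2r => //; exact: ltW.
exists rho; split; first by rewrite rho0 rho1.
have e00 : 0 <= e0 by rewrite /e0 /enorm sqrtr_ge0.
have allb' : forall t s, (s <= t)%N -> enorm (x s - xstar) <= e0.
  elim=> [|t IH] s.
    by rewrite leqn0 => /eqP ->.
  rewrite leq_eqVlt => /orP [/eqP ->|]; last by apply: IH.
  apply: le_trans (step t e0 e00 _) _.
    by move=> i; apply: IH; exact: info_time_le.
  by rewrite -[leRHS]mul1r; apply: ler_wpM2r => //; exact: ltW.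
have allb : forall t, enorm (x t - xstar) <= e0 := fun t => allb' t t (leqnn t).
have ep : forall m e, epoch_start sched m e -> forall t, (e <= t)%N ->
    enorm (x t.+1 - xstar) <= rho ^+ m * e0.
  move=> m e; elim=> [|m' e' t' _ IH htwo _] t het.
    by rewrite expr1; apply: step => // i; exact: allb.
  rewrite exprS -mulrA; apply: step; first by apply: mulr_ge0 => //; exact: exprn_ge0.
  move=> i; have [D [hD hDe]] := htwo i.
  have := @info_time_mono _ sched i t' t D e' hD hDe het.
  case: (info_time sched i t) => [//|s] hs.
  by apply: IH.
move=> m t [e [he [het _]]].
exact: ep he t het.
Qed.
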